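(* There is no Abel universal function with Hadamard gaps; that is, no $f\in\mathcal{U}_A(\mathbb{D})$ has Hadamard gaps.
   Context: $\mathbb{D}$ is the open unit disc, $\mathbb{T}$ the unit circle. $\mathcal{U}_A(\mathbb{D})$ (the Abel universal functions) is the set of $f\in H(\mathbb{D})$ such that for every $\varepsilon>0$, every compact $K\subset\mathbb{T}$ with $K\ne\mathbb{T}$ and every continuous $\varphi$ on $K$, there is $r\in[0,1)$ with $\sup_{\zeta\in K}|f(r\zeta)-\varphi(\zeta)|\le\varepsilon$. A power series $f(z)=\sum_k a_kz^k$ with radius of convergence $1$ has Hadamard gaps if there is a sequence $(n_k)$ in $\mathbb{N}$ with $\inf_k n_{k+1}/n_k>1$ such that $a_j=0$ whenever $j\notin\{n_k:k\in\mathbb{N}\}$. *)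

(* Defs.v *)
From Stdlib Require Import Reals List.
From Coquelicot Require Import Coquelicot.
Open Scope R_scope.

Definition unit_disc (z : C) : Prop := Cmod z < 1.
Definition unit_circle (z : C) : Prop := Cmod z = 1.

Definition power_series_on_disc (a : nat -> C) (f : C -> C) : Prop :=
  forall z : C, unit_disc z ->
    is_series (fun k => Cmult (a k) (pow_n z k)) (f z).

Definition radius_of_convergence (a : nat -> C) : Rbar :=
  CV_radius (fun k => Cmod (a k)).

Definition compact_set (K : C -> Prop) : Prop :=
  forall (I : Type) (U : I -> C -> Prop),
    (forall i, open (U i)) ->
    (forall z, K z -> exists i, U i z) ->
    exists l : list I, forall z, K z -> exists i, In i l /\ U i z.

Definition continuous_on (K : C -> Prop) (phi : C -> C) : Prop :=
  forall zeta, K zeta -> forall eps : R, 0 < eps ->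
    exists delta : R, 0 < delta /\
      forall xi, K xi -> Cmod (Cminus xi zeta) < delta ->
        Cmod (Cminus (phi xi) (phi zeta)) < eps.

(* Abel universality of f (only values on the disc matter, since r < 1) *)
Definition abel_universal (f : C -> C) : Prop :=
  forall (eps : R), 0 < eps ->
  forall (K : C -> Prop),
    (forall z, K z -> unit_circle z) ->
    compact_set K ->
    (exists z, unit_circle z /\ ~ K z) ->
  forall (phi : C -> C), continuous_on K phi ->
    exists r : R, 0 <= r < 1 /\
      forall zeta, K zeta ->
        Cmod (Cminus (f (RtoC r * zeta)%C) (phi zeta)) <= eps.

Definition hadamard_gaps (a : nat -> C) : Prop :=
  radius_of_convergence a = Finite 1 /\
  exists (n : nat -> nat) (q : R), 1 < q /\
    (forall k, q * INR (n k) <= INR (n (S k))) /\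
    (forall j, (forall k, n k <> j) -> a j = RtoC 0).

(* Main.v *)
From Stdlib Require Import Reals List Lra Lia Classical ClassicalEpsilon.
From Coquelicot Require Import Coquelicot.
Require Import Defs.
Open Scope R_scope.

Definition ce (t : R) : C := (cos t, sin t).

Lemma ce_add a b : (ce a * ce b)%C = ce (a + b).
Proof. unfold ce, Cmult; simpl; rewrite cos_plus, sin_plus; f_equal; ring. Qed.

Lemma Cmod_ce t : Cmod (ce t) = 1.
Proof. unfold Cmod, ce. cbn [fst snd].
  replace (cos t ^ 2 + sin t ^ 2) with 1 by (rewrite <- (sin2_cos2 t); unfold Rsqr; ring).
  apply sqrt_1. Qed.

Lemma pow_ce (r t : R) (m : nat) :
  pow_n (RtoC r * ce t)%C m = (RtoC (r ^ m) * ce (INR m * t))%C.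
Proof.
  induction m as [|m IH].
  - simpl. unfold ce, Cmult, RtoC; simpl. rewrite Rmult_0_l, cos_0, sin_0.
    change (@one C_Ring) with (RtoC 1). unfold RtoC. f_equal; ring.
  - change (pow_n (RtoC r * ce t)%C (S m)) with (Cmult (RtoC r * ce t)%C (pow_n (RtoC r * ce t)%C m)).
    rewrite IH. rewrite S_INR.
    replace ((INR m + 1) * t) with (t + INR m * t) by ring.
    rewrite <- ce_add. generalize (ce t) (ce (INR m * t)). intros [x1 x2] [y1 y2].
    unfold Cmult, RtoC; simpl. f_equal; ring.
Qed.

Fixpoint avg (ts : list R) (F : R -> C) (t0 : R) : C :=
  match ts with
  | nil => F t0
  | t :: ts' => ((avg ts' F t0 + avg ts' F (t0 + t)) * RtoC (/ 2))%C
  end.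

Fixpoint Pm (ts : list R) (m : nat) : C :=
  match ts with
  | nil => RtoC 1
  | t :: ts' => ((RtoC 1 + ce (INR m * t)) * RtoC (/ 2) * Pm ts' m)%C
  end.

Lemma avg_series (u : nat -> C) (F : R -> C) ts :
  (forall t, is_series (fun m => (u m * ce (INR m * t))%C) (F t)) ->
  forall t0, is_series (fun m => (u m * ce (INR m * t0) * Pm ts m)%C) (avg ts F t0).
Proof.
  intros HF. induction ts as [|t ts IH]; intro t0; simpl.
  - eapply is_series_ext; [|apply HF]. intro m. simpl.
    generalize (u m * ce (INR m * t0))%C. intros [x y]. unfold Cmult, RtoC; simpl. f_equal; ring.
  - pose proof (is_series_plus _ _ _ _ (IH t0) (IH (t0 + t))) as H.
    pose proof (is_series_scal (RtoC (/2)) _ _ H) as H2.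
    replace ((avg ts F t0 + avg ts F (t0 + t)) * RtoC (/ 2))%C
      with (scal (RtoC (/2)) (plus (avg ts F t0) (avg ts F (t0 + t)))).
    2:{ change (scal (RtoC (/2)) (plus ?x ?y)) with (Cmult (RtoC (/2)) (Cplus x y)).
        apply Cmult_comm. }
    eapply is_series_ext; [|exact H2]. intro m. cbv beta.
    change (scal (RtoC (/2)) (plus ?x ?y)) with (Cmult (RtoC (/2)) (Cplus x y)).
    rewrite Rmult_plus_distr_l, <- ce_add.
    generalize (u m) (ce (INR m * t0)) (ce (INR m * t)) (Pm ts m).
    intros [a1 a2] [b1 b2] [c1 c2] [p1 p2]. unfold Cmult, Cplus, RtoC; simpl. f_equal; field.
Qed.

Fixpoint sumt (ts : list R) : R := match ts with nil => 0 | t :: ts' => t + sumt ts' end.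

Lemma avg_bound (F : R -> C) (w : C) (e : R) ts :
  List.Forall (fun t => 0 <= t) ts ->
  forall t0, (forall t, t0 <= t <= t0 + sumt ts -> Cmod (F t - w) <= e) ->
  Cmod (avg ts F t0 - w) <= e.
Proof.
  induction 1 as [|t ts Ht Hts IH]; intros t0 HF; simpl.
  - apply HF. simpl. lra.
  - simpl in HF.
    assert (H1 : Cmod (avg ts F t0 - w) <= e).
    { apply IH. intros s Hs. apply HF. assert (0 <= t) by lra. lra. }
    assert (H2 : Cmod (avg ts F (t0 + t) - w) <= e).
    { apply IH. intros s Hs. apply HF. lra. }
    replace ((avg ts F t0 + avg ts F (t0 + t)) * RtoC (/ 2) - w)%C
      with (((avg ts F t0 - w) + (avg ts F (t0 + t) - w)) * RtoC (/2))%C.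
    2:{ generalize (avg ts F t0) (avg ts F (t0 + t)) w. intros [a1 a2] [b1 b2] [c1 c2].
        unfold Cminus, Cmult, Cplus, Copp, RtoC; apply injective_projections; simpl; field. }
    rewrite Cmod_mult, Cmod_R. rewrite Rabs_pos_eq by lra.
    pose proof (Cmod_triangle (avg ts F t0 - w) (avg ts F (t0 + t) - w)). nra.
Qed.

Lemma Pm_zero ts m t : In t ts -> ce (INR m * t) = RtoC (-1) -> Pm ts m = RtoC 0.
Proof.
  induction ts as [|t' ts IH]; simpl; [tauto|]. intros [<-|Hin] Hce.
  - rewrite Hce. generalize (Pm ts m). intros [p1 p2]. unfold Cmult, Cplus, RtoC; simpl. f_equal; ring.
  - rewrite IH by auto. generalize ((RtoC 1 + ce (INR m * t')) * RtoC (/ 2))%C. intros [p1 p2].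
    unfold Cmult, RtoC; simpl. f_equal; ring.
Qed.

Lemma Cmod_Pm ts m : Cmod (Pm ts m) <= 1.
Proof.
  induction ts as [|t ts IH]; simpl.
  - rewrite Cmod_R, Rabs_R1. lra.
  - rewrite !Cmod_mult, Cmod_R, Rabs_pos_eq by lra.
    pose proof (Cmod_triangle (RtoC 1) (ce (INR m * t))). rewrite Cmod_R, Rabs_R1, Cmod_ce in H.
    pose proof (Cmod_ge_0 ((RtoC 1 + ce (INR m * t)))). pose proof (Cmod_ge_0 (Pm ts m)).
    assert (Cmod (RtoC 1 + ce (INR m * t)) * / 2 <= 1) by lra.
    assert (0 <= Cmod (RtoC 1 + ce (INR m * t)) * / 2) by lra. nra.
Qed.

Definition Kh (z : C) : Prop := exists t, 0 <= t <= PI /\ z = ce t.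

Lemma ce_cont (y : R) (eps : posreal) : exists delta : posreal,
  forall z, Rabs (z - y) < delta -> ball (ce y) eps (ce z).
Proof.
  pose proof (proj1 (filterlim_locally cos (cos y)) (continuous_cos y) eps) as [d1 H1].
  pose proof (proj1 (filterlim_locally sin (sin y)) (continuous_sin y) eps) as [d2 H2].
  assert (Hd : 0 < Rmin d1 d2) by (apply Rmin_pos; apply cond_pos).
  exists (mkposreal _ Hd). intros z Hz. simpl in Hz. split; simpl.
  - apply H1. change (Rabs (z - y) < d1). pose proof (Rmin_l d1 d2). lra.
  - apply H2. change (Rabs (z - y) < d2). pose proof (Rmin_r d1 d2). lra.
Qed.

Lemma Kh_compact : compact_set Kh.
Proof.
  intros I U HU Hcov.
  destruct (Hcov (ce 0)) as [i0 _].
  { exists 0. split; [split; [lra| pose proof PI_RGT_0; lra] | reflexivity]. }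
  assert (Hsel : forall t, exists i, 0 <= t <= PI -> U i (ce t)).
  { intro t. destruct (classic (0 <= t <= PI)) as [Ht|Ht].
    - destruct (Hcov (ce t)) as [i Hi]. { exists t; auto. } exists i; auto.
    - exists i0. tauto. }
  set (sel := fun t => proj1_sig (constructive_indefinite_description _ (Hsel t))).
  assert (Hs : forall t, 0 <= t <= PI -> U (sel t) (ce t)).
  { intro t. unfold sel. destruct (constructive_indefinite_description _ (Hsel t)). simpl. auto. }
  set (ff := fun t y => 0 <= t <= PI /\ U (sel t) (ce y)).
  assert (Hcf : forall x, (exists y, ff x y) -> 0 <= x <= PI).
  { intros x [y [Hy _]]. exact Hy. }
  set (fam := mkfamily (fun t => 0 <= t <= PI) ff Hcf).
  destruct (compact_P3 0 PI fam) as [D [HDc [l Hl]]].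
  { split.
    - intros x Hx. exists x. simpl. unfold ff. auto.
    - intros t y [Ht HUy]. simpl in HUy.
      destruct (HU (sel t) (ce y) HUy) as [eps Heps].
      destruct (ce_cont y eps) as [delta Hd].
      exists delta. intros z Hz. unfold disc in Hz. simpl. unfold ff. split; auto. }
  exists (map sel l). intros z [t [Ht ->]].
  destruct (HDc t Ht) as [y [[Hy1 Hy2] HDy]].
  exists (sel y). split.
  - apply in_map. apply Hl. simpl. unfold intersection_domain. split; auto. destruct Hy1; auto.
Qed.

Lemma real_step (q x y : R) : 1 < q -> 1 <= x -> q * x <= y ->
  PI / x + PI * (q / (q - 1)) / y <= PI * (q / (q - 1)) / x.
Proof.
  intros Hq Hx Hy. pose proof PI_RGT_0 as Hpi.
  assert (Hy0 : 0 < y) by nra.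
  assert (E : PI * (q / (q - 1)) / x - PI / x = PI / ((q - 1) * x)) by (field; lra).
  assert (PI * (q / (q - 1)) / y <= PI * (q / (q - 1)) / (q * x)).
  { unfold Rdiv. apply Rmult_le_compat_l.
    - apply Rmult_le_pos; [lra|]. apply Rlt_le. apply Rdiv_lt_0_compat; lra.
    - apply Rinv_le_contravar; nra. }
  assert (PI * (q / (q - 1)) / (q * x) = PI / ((q - 1) * x)) by (field; repeat split; lra).
  lra.
Qed.

Section S.
Variables (a : nat -> C) (n : nat -> nat) (q : R).
Hypothesis Hq : 1 < q.
Hypothesis Hn : forall k, q * INR (n k) <= INR (n (S k)).

Lemma step j : (1 <= n j)%nat -> (n j < n (S j))%nat.
Proof.
  intro H. apply INR_lt. pose proof (Hn j). apply le_INR in H. simpl in H. nra.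
Qed.

Lemma mono i : (1 <= n i)%nat -> forall d, (n i + d <= n (i + d))%nat.
Proof.
  intros H d. induction d as [|d IH].
  - rewrite !Nat.add_0_r. lia.
  - replace (i + S d)%nat with (S (i + d)) by lia. assert (1 <= n (i + d))%nat by lia. pose proof (step (i + d) H0). lia.
Qed.

Lemma tele s : (1 <= n s)%nat -> forall len,
  sumt (map (fun j => PI / INR (n j)) (seq s len)) + PI * (q / (q - 1)) / INR (n (s + len))
  <= PI * (q / (q - 1)) / INR (n s).
Proof.
  intros Hs len. revert s Hs. induction len as [|len IH]; intros s Hs.
  - simpl. rewrite Nat.add_0_r. lra.
  - simpl. replace (s + S len)%nat with (S s + len)%nat by lia.
    assert (H1 : (1 <= n (S s))%nat) by (pose proof (step s Hs); lia).
    pose proof (IH (S s) H1).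
    pose proof (real_step q (INR (n s)) (INR (n (S s))) Hq) as R.
    assert (1 <= INR (n s)) by (apply le_INR in Hs; simpl in Hs; lra).
    specialize (R H0 (Hn s)). lra.
Qed.
End S.

Lemma structure (a : nat -> C) (n : nat -> nat) (q : R) :
  1 < q -> (forall k, q * INR (n k) <= INR (n (S k))) ->
  (forall j, (forall k, n k <> j) -> a j = RtoC 0) ->
  exists L, (1 <= L)%nat /\ forall p0, exists ts p, (p0 <= p)%nat /\ (L <= p)%nat /\
    List.Forall (fun t => 0 <= t) ts /\ sumt ts <= PI /\
    forall m, (L <= m <= p)%nat -> (a m * Pm ts m)%C = RtoC 0.
Proof.
  intros Hq Hn Hgap. pose proof PI_RGT_0 as Hpi.
  destruct (classic (exists k, (1 <= n k)%nat)) as [[k1 Hk1]|Hno].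
  - set (c := q / (q - 1)).
    destruct (INR_archimed 1 c) as [d Hd]; [lra|]. rewrite Rmult_1_r in Hd.
    set (k0 := (k1 + d)%nat).
    assert (Hk0 : (1 + d <= n k0)%nat) by (pose proof (mono n q Hq Hn k1 Hk1 d); unfold k0; lia).
    assert (Hk0' : (1 <= n k0)%nat) by lia.
    assert (Hc : c / INR (n k0) <= 1).
    { apply le_INR in Hk0. rewrite plus_INR in Hk0. simpl in Hk0.
      assert (0 < c) by (unfold c; apply Rdiv_lt_0_compat; lra).
      apply (Rmult_le_reg_r (INR (n k0))); [lra|]. field_simplify; lra. }
    exists (n k0). split; [exact Hk0'|]. intro p0.
    set (N := (k0 + p0)%nat).
    pose proof (mono n q Hq Hn k0 Hk0' p0) as HN. fold N in HN.
    exists (map (fun j => PI / INR (n j)) (seq k0 (S p0))), (n N).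
    split; [lia|]. split; [lia|]. split; [|split].
    + apply Forall_forall. intros t Ht. apply in_map_iff in Ht. destruct Ht as [j [<- Hj]].
      apply in_seq in Hj. assert (1 <= n j)%nat.
      { pose proof (mono n q Hq Hn k0 Hk0' (j - k0)). replace (k0 + (j - k0))%nat with j in H by lia. lia. }
      apply Rlt_le. apply Rdiv_lt_0_compat; [lra|]. apply lt_0_INR. lia.
    + pose proof (tele n q Hq Hn k0 Hk0' (S p0)).
      assert (0 <= PI * (q / (q - 1)) / INR (n (k0 + S p0)%nat)).
      { assert (1 <= n (k0 + S p0))%nat by (pose proof (mono n q Hq Hn k0 Hk0' (S p0)); lia).
        apply Rmult_le_pos; [apply Rmult_le_pos; [lra| unfold Rdiv; apply Rmult_le_pos; [lra| apply Rlt_le, Rinv_0_lt_compat; lra]]|].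
        apply Rlt_le, Rinv_0_lt_compat. apply lt_0_INR. lia. }
      fold c in H, H0.
      assert (PI * c / INR (n k0) <= PI).
      { unfold Rdiv. rewrite Rmult_assoc. unfold Rdiv in Hc. nra. }
      lra.
    + intros m Hm. destruct (classic (exists k, n k = m)) as [[k Hk]|Hnk].
      * assert (Hkk : (k0 <= k <= N)%nat).
        { split.
          - destruct (Compare_dec.le_lt_dec k0 k) as [|Hlt]; [assumption|].
            pose proof (mono n q Hq Hn k ltac:(lia) (k0 - k)).
            replace (k + (k0 - k))%nat with k0 in H by lia. lia.
          - destruct (Compare_dec.le_lt_dec k N) as [|Hlt]; [assumption|].
            pose proof (mono n q Hq Hn N ltac:(lia) (k - N)).
            replace (N + (k - N))%nat with k in H by lia. lia. }
        rewrite (Pm_zero _ m (PI / INR (n k))).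
        { generalize (a m). intros [x y]. unfold Cmult, RtoC; apply injective_projections; simpl; ring. }
        { apply (in_map (fun j => PI / INR (n j))). apply in_seq. unfold N in Hkk. lia. }
        { rewrite <- Hk. replace (INR (n k) * (PI / INR (n k))) with PI.
          - unfold ce, RtoC. rewrite cos_PI, sin_PI. reflexivity.
          - field. apply not_0_INR. lia. }
      * rewrite Hgap. { generalize (Pm (map (fun j : nat => PI / INR (n j)) (seq k0 (S p0))) m).
          intros [x y]. unfold Cmult, RtoC; apply injective_projections; simpl; ring. }
        intros k Hk. apply Hnk. eauto.
  - exists 1%nat. split; [lia|]. intro p0. exists nil, (S p0).
    split; [lia|]. split; [lia|]. split; [constructor|]. split; [simpl; lra|].
    intros m Hm. rewrite Hgap.
    { unfold Cmult, RtoC; apply injective_projections; simpl; ring. }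
    intros k Hk. apply Hno. exists k. lia.
Qed.

Lemma pow_le1 (r : R) m : 0 <= r <= 1 -> r ^ m <= 1.
Proof. intros Hr. induction m; simpl; [lra|]. pose proof (pow_le r m (proj1 Hr)). nra. Qed.

Theorem corollary4p4 :
  forall (a : nat -> C) (f : C -> C),
    power_series_on_disc a f ->
    hadamard_gaps a ->
    ~ abel_universal f.
Proof.
  intros a f Hps [Hrad [n [q [Hq [Hn Hgap]]]]] Hab.
  destruct (structure a n q Hq Hn Hgap) as [L [HL Hst]].
  set (B := sum_n_m (fun m => Cmod (a m)) 0 (pred L)).
  set (M := RtoC (Rabs B + 2)).
  assert (HM : Cmod M = Rabs B + 2).
  { unfold M. rewrite Cmod_R. apply Rabs_pos_eq. pose proof (Rabs_pos B). lra. }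
  specialize (Hab 1 Rlt_0_1 Kh).
  destruct Hab with (phi := fun _ : C => M) as [r [[Hr0 Hr1] Happ]].
  { intros z [t [_ ->]]. apply Cmod_ce. }
  { apply Kh_compact. }
  { exists (0, -1). split.
    - unfold unit_circle, Cmod. simpl. replace (0 * (0 * 1) + -1 * (-1 * 1)) with 1 by ring.
      apply sqrt_1.
    - intros [t [Ht Heq]]. unfold ce in Heq. injection Heq. intros Hs _.
      pose proof (sin_ge_0 t (proj1 Ht) (proj2 Ht)). lra. }
  { intros z _ eps Heps. exists 1. split; [lra|]. intros xi _ _.
    replace (M - M)%C with (RtoC 0).
    - rewrite Cmod_0. exact Heps.
    - unfold Cminus, Cplus, Copp, RtoC. apply injective_projections; simpl; ring. }
  set (w := fun m => Cmod (a m) * r ^ m).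
  assert (Hw : ex_series w).
  { eapply ex_series_ext; [|apply (CV_disk_inside (fun k => Cmod (a k)) r)].
    - intro m. unfold w. apply Rabs_pos_eq. apply Rmult_le_pos; [apply Cmod_ge_0| apply pow_le; lra].
    - unfold radius_of_convergence in Hrad. rewrite Hrad. simpl. rewrite Rabs_pos_eq; lra. }
  assert (Hhalf : 0 < / 2) by lra.
  destruct (Cauchy_ex_series w Hw (mkposreal _ Hhalf)) as [N0 HN0]. simpl in HN0.
  destruct (Hst N0) as [ts [p [Hp0 [HLp [Hts [Hsum Hvan]]]]]].
  set (u := fun m => (a m * RtoC (r ^ m))%C).
  set (F := fun t => f (RtoC r * ce t)%C).
  assert (HF : forall t, is_series (fun m => (u m * ce (INR m * t))%C) (F t)).
  { intro t. eapply is_series_ext; [|apply Hps].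
    - intro m. cbv beta. rewrite pow_ce. unfold u. apply Cmult_assoc.
    - unfold unit_disc. rewrite Cmod_mult, Cmod_R, Cmod_ce, Rabs_pos_eq; lra. }
  pose proof (avg_series u F ts HF 0) as HS.
  set (Sv := avg ts F 0) in HS.
  set (v := fun m => (u m * ce (INR m * 0) * Pm ts m)%C) in HS.
  assert (H1 : Cmod (Sv - M) <= 1).
  { apply avg_bound; [exact Hts|]. intros t Ht. unfold F. apply Happ. exists t. split; [lra|reflexivity]. }
  assert (Hv : forall m, Cmod (v m) <= w m).
  { intro m. unfold v, u, w. rewrite !Cmod_mult, Cmod_ce, Cmod_R, Rabs_pos_eq by (apply pow_le; lra).
    pose proof (Cmod_Pm ts m). pose proof (Cmod_ge_0 (a m)). pose proof (pow_le r m Hr0).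
    assert (0 <= Cmod (a m) * r ^ m) by (apply Rmult_le_pos; lra). nra. }
  assert (Hv' : forall m, Cmod (v m) <= Cmod (a m)).
  { intro m. eapply Rle_trans; [apply Hv|]. unfold w.
    pose proof (pow_le1 r m ltac:(lra)). pose proof (Cmod_ge_0 (a m)). nra. }
  assert (Hmid : forall m, (L <= m <= p)%nat -> v m = zero).
  { intros m Hm. unfold v, u.
    replace (a m * RtoC (r ^ m) * ce (INR m * 0) * Pm ts m)%C
      with ((a m * Pm ts m) * (RtoC (r ^ m) * ce (INR m * 0)))%C.
    - rewrite Hvan by exact Hm. apply Cmult_0_l.
    - generalize (a m) (Pm ts m) (ce (INR m * 0)). intros [x1 x2] [y1 y2] [z1 z2].
      unfold Cmult, RtoC. apply injective_projections; simpl; ring. }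
  assert (Hpart : forall K, (S p <= K)%nat -> Cmod (sum_n v K) <= Rabs B + / 2).
  { intros K HK. unfold sum_n.
    rewrite (sum_n_m_Chasles v 0 (pred L) K) by lia.
    rewrite (sum_n_m_Chasles v (S (pred L)) p K) by lia.
    rewrite (sum_n_m_ext_loc v (fun _ => zero) (S (pred L)) p).
    2:{ intros k Hk. apply Hmid. lia. }
    rewrite sum_n_m_const_zero, plus_zero_l.
    eapply Rle_trans; [apply Cmod_triangle|].
    apply Rplus_le_compat.
    - eapply Rle_trans; [apply (norm_sum_n_m (V := C_NormedModule))|].
      apply Rle_trans with B; [|apply Rle_abs].
      apply sum_n_m_le. intro k. apply Hv'.
    - eapply Rle_trans; [apply (norm_sum_n_m (V := C_NormedModule))|].
      apply Rle_trans with (sum_n_m w (S p) K).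
      + apply sum_n_m_le. intro k. apply Hv.
      + apply Rlt_le. eapply Rle_lt_trans; [apply Rle_abs|]. apply (HN0 (S p) K); lia. }
  assert (HSb : Cmod Sv <= Rabs B + / 2).
  { apply Rle_plus_epsilon. intros eps Heps.
    pose proof (@norm_factor_gt_0 C_AbsRing C_NormedModule) as Hnf.
    set (nf := @norm_factor C_AbsRing C_NormedModule) in Hnf.
    assert (He : 0 < eps / nf) by (apply Rdiv_lt_0_compat; lra).
    destruct (proj1 (filterlim_locally _ _) HS (mkposreal _ He)) as [N1 HN1].
    set (K := max N1 (S p)).
    specialize (HN1 K ltac:(unfold K; lia)).
    pose proof (norm_compat2 _ _ _ HN1) as Hc. simpl in Hc.
    fold nf in Hc. replace (nf * (eps / nf)) with eps in Hc by (field; lra).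
    specialize (Hpart K ltac:(unfold K; lia)).
    change (norm (minus (sum_n v K) Sv)) with (Cmod (sum_n v K - Sv)%C) in Hc.
    replace Sv with (sum_n v K + - (sum_n v K - Sv))%C at 1.
    - eapply Rle_trans; [apply Cmod_triangle|]. rewrite Cmod_opp. lra.
    - generalize (sum_n v K) Sv. intros [x1 x2] [y1 y2].
      unfold Cminus, Cplus, Copp. apply injective_projections; simpl; ring. }
  assert (Cmod M <= Cmod Sv + Cmod (Sv - M)).
  { replace M with (Sv + - (Sv - M))%C at 1.
    - eapply Rle_trans; [apply Cmod_triangle|]. rewrite Cmod_opp. lra.
    - generalize Sv M. intros [x1 x2] [y1 y2].
      unfold Cminus, Cplus, Copp. apply injective_projections; simpl; ring. }
  lra.
Qed.
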